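(* Let $\mathcal D$ be a family of sets of literals all of whose elements are non-trivial, and let $x\in X$ be a variable such that $\mathcal D$ is $x$-orthogonal. Then $$\mathbf I_x\Big(\bigvee_{C\in\mathcal D}\bigwedge_{\eta\in C}\eta\Big)=2\cdot\mathbf{JW}_x(\mathcal D).$$
   Context: $X$ is a fixed finite set of variables; literals are elements of $X\cup\{\overline z:z\in X\}$ and are interpreted as the Boolean functions $\mathbf u\mapsto\mathbf u(z)$ resp. $1-\mathbf u(z)$ on $\{0,1\}^X$. A family of sets of literals is a set of subsets of $X\cup\{\overline z:z\in X\}$. A set of literals $C$ is trivial if $z\in C$ and $\overline z\in C$ for some variable $z$. $\mathcal D$ is $x$-orthogonal if for all $C\ne C'$ in $\mathcal D$ there is a literal $\eta\notin\{x,\overline x\}$ with $\eta\in C$ and $\overline\eta\in C'$ (where $\overline{\overline z}=z$). The two-sided Jeroslow–Wang value is $\mathbf{JW}_x(\mathcal D)=\sum_{C\in\mathcal D:\,x\in C\text{ or }\overline x\in C}2^{-|C|}$. The influence is $\mathbf I_x(f)=\mathbb E[f_{x/1}\oplus f_{x/0}]$, expectation under the uniform distribution on $\{0,1\}^X$, where $f_{x/c}$ is $f$ with $x$ fixed to $c$. *)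

(* Defs.v *)
From mathcomp Require Import all_boot all_order all_algebra.
Set Implicit Arguments. Unset Strict Implicit. Unset Printing Implicit Defensive.
Import Order.TTheory GRing.Theory Num.Theory.
Local Open Scope ring_scope.

(* A literal over variables X: (z, true) is z, (z, false) is overline z. *)
Definition lit (X : finType) := (X * bool)%type.
Definition negl (X : finType) (l : lit X) : lit X := (l.1, ~~ l.2).
Definition assign (X : finType) := {ffun X -> bool}.

Definition lit_val (X : finType) (l : lit X) (u : assign X) : bool :=
  if l.2 then u l.1 else ~~ u l.1.

Definition dnf (X : finType) (D : {set {set lit X}}) (u : assign X) : bool :=
  [exists C in D, [forall l in C, lit_val l u]].

Definition trivial_clause (X : finType) (C : {set lit X}) : bool :=
  [exists z : X, ((z, true) \in C) && ((z, false) \in C)].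

Definition x_orthogonal (X : finType) (x : X) (D : {set {set lit X}}) : Prop :=
  forall C C', C \in D -> C' \in D -> C != C' ->
    exists eta : lit X, [/\ eta.1 != x, eta \in C & negl eta \in C'].

Definition fix_var (X : finType) (x : X) (c : bool) (u : assign X) : assign X :=
  [ffun z => if z == x then c else u z].

Definition expect (X : finType) (g : assign X -> bool) : rat :=
  (\sum_(u : assign X) (g u)%:R) / (#|{: assign X}|)%:R.

Definition influence (X : finType) (x : X) (f : assign X -> bool) : rat :=
  expect (fun u => f (fix_var x true u) (+) f (fix_var x false u)).

Definition JW (X : finType) (x : X) (D : {set {set lit X}}) : rat :=
  \sum_(C in D | ((x, true) \in C) || ((x, false) \in C)) (2%:R ^- #|C|).

(* Main.v *)
Require Import Defs.
From mathcomp Require Import all_boot all_order all_algebra.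
Set Implicit Arguments. Unset Strict Implicit. Unset Printing Implicit Defensive.

Definition satS (X : finType) (S : {set lit X}) (u : assign X) : bool :=
  [forall l in S, lit_val l u].

Lemma card_sat (X : finType) (S : {set lit X}) :
  ~~ trivial_clause S ->
  (#|[set u | satS S u]| * 2 ^ #|S| = 2 ^ #|X|)%N.
Proof.
move=> nt.
have ntS : forall z, (z, true) \in S -> (z, false) \in S -> False.
  move=> z h1 h2; move/negP: nt; apply; apply/existsP; exists z; by rewrite h1 h2.
pose V := [set l.1 | l in S].
pose g := fun z : X => (z, true) \in S.
pose F := fun z : X => if z \in V then pred1 (g z) else predT.
have -> : [set u | satS S u] = [set u : assign X in family F].
  apply/setP => u; rewrite !inE; apply/forallP/familyP => /= H.
  - move=> z; rewrite /F; case: ifP => //= /imsetP [l lS ->].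
    move: (H l); rewrite lS /= /lit_val /g.
    case: l lS => z0 [] lS /= h; first by rewrite lS h.
    have -> : ((z0,true) \in S) = false by apply/negP => h'; exact: ntS z0 h' lS.
    by rewrite inE (negbTE h).
  - move=> l; apply/implyP => lS; move: (H l.1); rewrite /F.
    have -> : l.1 \in V by apply/imsetP; exists l.
    rewrite /= /lit_val /g => /eqP ->.
    case: l lS => z0 [] lS /=; first by [].
    apply/negP => h'; exact: ntS z0 h' lS.
rewrite cardsE card_family foldrE big_map big_enum /=.
have -> : (\prod_(i in X) #|F i| = \prod_(i in X) (if i \in V then 1 else 2))%N.
  apply: eq_bigr => i _; rewrite /F; case: ifP => _.
    by rewrite card1.
  exact: card_bool.
have -> : (\prod_(i in X) (if i \in V then 1 else 2) = \prod_(i in ~: V) 2)%N.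
  rewrite (bigID (mem V)) /= big1 ?mul1n; last by move=> i; rewrite ?inE /= => ->.
  apply: eq_big => [i|i]; rewrite ?inE //=; by move=> /negbTE ->.
rewrite prod_nat_const -expnD.
have -> : #|S| = #|V|.
  rewrite card_in_imset //; case=> [z b] [z' b'] lS l'S /= ez; subst z'.
  case: b b' lS l'S => [] [] // lS l'S; [case: (ntS z lS l'S) | case: (ntS z l'S lS)].
by rewrite addnC cardsC.
Qed.

Definition Cx (X : finType) (x : X) (C : {set lit X}) := [set l in C | l.1 != x].
Definition xl (X : finType) (x : X) (C : {set lit X}) := ((x,true) \in C) || ((x,false) \in C).

Lemma lit_fix_ne (X : finType) (x : X) c u (l : lit X) :
  l.1 != x -> lit_val l (fix_var x c u) = lit_val l u.
Proof. by move=> h; rewrite /lit_val /fix_var !ffunE (negbTE h). Qed.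

Lemma clause_fix (X : finType) (x : X) c u (C : {set lit X}) :
  [forall l in C, lit_val l (fix_var x c u)] = satS (Cx x C) u && ((x, ~~c) \notin C).
Proof.
apply/forallP/andP => [H|[/forallP H1 H2] l].
- split.
  + apply/forallP => l; apply/implyP; rewrite inE => /andP [lC lx].
    by move: (H l); rewrite lC /= lit_fix_ne.
  + apply/negP => h; move: (H (x, ~~c)); rewrite h /= /lit_val /fix_var ffunE eqxx.
    by move=> hv; move: hv H h; case: c.
- apply/implyP => lC; case: (eqVneq l.1 x) => lx.
  + case: l lC lx => z b lC /= lx; subst z; rewrite /lit_val /fix_var ffunE eqxx /=.
    move: H2; clear H1; case: b lC => lC; case: c => //=; by rewrite lC.
  + by rewrite lit_fix_ne //; move: (H1 l); rewrite inE lC lx.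
Qed.

Lemma orth_uniq (X : finType) (x : X) (D : {set {set lit X}}) u C C0 :
  x_orthogonal x D -> C \in D -> C0 \in D -> satS (Cx x C) u -> satS (Cx x C0) u -> C = C0.
Proof.
move=> ho CD C0D h h0; apply/eqP; apply/negPn/negP => ne.
have [eta [e1 e2 e3]] := ho C C0 CD C0D ne.
move/forallP: h => /(_ eta); rewrite inE e2 e1 /= => v1.
move/forallP: h0 => /(_ (negl eta)); rewrite inE e3 /= e1 /= /lit_val /=.
by move: v1; rewrite /lit_val; case: (eta.2); case: (u eta.1).
Qed.

Lemma pointwise (X : finType) (D : {set {set lit X}}) (x : X) u :
  (forall C, C \in D -> ~~ trivial_clause C) ->
  x_orthogonal x D ->
  ((dnf D (fix_var x true u) (+) dnf D (fix_var x false u) : nat)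
   = \sum_(C in D | xl x C) (satS (Cx x C) u : nat))%N.
Proof.
move=> hnt ho.
case: (pickP (fun C => (C \in D) && satS (Cx x C) u)) => [C0 /andP [C0D s0]|none].
- have dn : forall c, dnf D (fix_var x c u) = ((x, ~~c) \notin C0).
    move=> c; rewrite /dnf; apply/existsP/idP => [[C /andP [CD]]|h].
      rewrite clause_fix => /andP [sC h]; by rewrite -(orth_uniq ho CD C0D sC s0).
    by exists C0; rewrite C0D clause_fix s0.
  rewrite !dn /=.
  have nt0 : ~~ (((x,true) \in C0) && ((x,false) \in C0)).
    apply/negP => /andP [a b]; move/negP: (hnt C0 C0D); apply; apply/existsP; exists x; by rewrite a b.
  case E: (xl x C0).
  + rewrite (bigD1 C0) ?C0D ?E //= s0 big1 ?addn0.
      by move: E nt0; rewrite /xl; case: ((x,true) \in C0); case: ((x,false) \in C0).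
    move=> C /andP [/andP [CD _] ne]; case sC: (satS (Cx x C) u) => //.
    by rewrite (orth_uniq ho CD C0D sC s0) eqxx in ne.
  + rewrite big1; last first.
      move=> C /andP [CD xC]; case sC: (satS (Cx x C) u) => //.
      by rewrite (orth_uniq ho CD C0D sC s0) E in xC.
    by move: E; rewrite /xl; case: ((x,true) \in C0); case: ((x,false) \in C0).
- have dn : forall c, dnf D (fix_var x c u) = false.
    move=> c; apply/existsP => [[C /andP [CD]]]; rewrite clause_fix => /andP [sC _].
    by move: (none C); rewrite CD sC.
  rewrite !dn big1 // => C /andP [CD _]; move: (none C); rewrite CD /=; by case: satS.
Qed.

Lemma card_Cx (X : finType) (x : X) (C : {set lit X}) :
  ~~ trivial_clause C -> xl x C -> #|C| = (#|Cx x C|).+1.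
Proof.
move=> nt xC.
have nt0 : ~~ (((x,true) \in C) && ((x,false) \in C)).
  apply/negP => /andP [a b]; move/negP: nt; apply; apply/existsP; exists x; by rewrite a b.
pose B := [set l : lit X | l.1 == x].
have -> : Cx x C = C :\: B by apply/setP => l; rewrite !inE andbC.
rewrite -(cardsID B C) addnC -addn1; congr (_ + _)%N.
have [b bC] : exists b, (x, b) \in C by move: xC; rewrite /xl; case/orP => h; [exists true|exists false].
rewrite (_ : C :&: B = [set (x, b)]) ?cards1 //.
apply/setP => [[z c]]; rewrite !inE /=; apply/andP/eqP => [[zC /eqP zx]|[-> ->]]; last by rewrite bC eqxx.
subst z; congr pair; by case: b c zC bC => [] [] // a b; rewrite a b in nt0.
Qed.

From mathcomp Require Import ring.
Import GRing.Theory Num.Theory.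
Local Open Scope ring_scope.

Lemma sum_ind (T : finType) (P : pred T) : (\sum_(u : T) (P u : nat) = #|[set u | P u]|)%N.
Proof. rewrite -sum1dep_card [in RHS]big_mkcond /=; apply eq_bigr => u _; by case: (P u). Qed.

Theorem mainTheorem9 (X : finType) (D : {set {set lit X}}) (x : X) :
  (forall C, C \in D -> ~~ trivial_clause C) ->
  x_orthogonal x D ->
  influence x (dnf D) = 2%:R * JW x D.
Proof.
move=> hnt ho; rewrite /influence /expect /JW.
rewrite -natr_sum.
under eq_bigr => u _ do rewrite (pointwise u hnt ho).
rewrite exchange_big /= card_ffun card_bool natr_sum mulr_suml mulr_sumr.
apply: eq_big => // C /andP [CD xC].
rewrite sum_ind.
have nt := hnt C CD.
have ntx : ~~ trivial_clause (Cx x C).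
  apply/negP => /existsP [z /andP [a b]]; move/negP: nt; apply; apply/existsP; exists z.
  by move: a b; rewrite !inE => /andP [-> _] /andP [-> _].
have H := card_sat ntx.
rewrite (card_Cx nt xC).
move: H; set a := #|_|; set k := #|Cx x C| => H.
have H' : (a%:R * 2%:R ^+ k = 2%:R ^+ #|X| :> rat).
  by rewrite -natrX -natrM H natrX.
have a0 : (a%:R != 0 :> rat).
  apply/eqP => a0; move: H'; rewrite a0 mul0r => /eqP; rewrite eq_sym expf_eq0 /=.
  by case/andP => _ /eqP; apply/eqP; rewrite pnatr_eq0.
rewrite natrX -H' exprS.
field.
apply/andP; split => //; by rewrite expf_neq0 // pnatr_eq0.
Qed.
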